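(* Let $N\ge1$, $W,N_0,P_A,P^{max}>0$ and for $i=1,\dots,N$ let $D_i,\zeta_i,h_i,g_i>0$. Consider the problem: minimize $\tau_0+\sum_{i=1}^N\tau_{S_i}$ over $\tau_0,\tau_{S_i},P_{S_i}\ge0$ subject to, for all $i$, $P_{S_i}\tau_{S_i}\le\zeta_iP_Ah_i\tau_0$, $\tau_{S_i}W\log_2\left(1+\frac{P_{S_i}g_i}{WN_0}\right)\ge D_i$, and $P_{S_i}\le P^{max}$. For each $i$ let $\ddot\tau_0^i=\frac{P^{max}}{\zeta_iP_Ah_i}\cdot\frac{D_i}{W\log_2(1+P^{max}g_i/(WN_0))}$ (the harvesting time for which, with source $i$ alone, all three constraints hold with equality), and let $\ddot\tau_0^{max}=\max_{i=1,\dots,N}\ddot\tau_0^i$. Then $\ddot\tau_0^{max}$ is an upper bound on the optimal value of $\tau_0$ in this problem.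
   Context: Multiple source wireless powered network: all sources harvest energy from an AP of power $P_A$ during a common time $\tau_0$ (source $i$ harvests $\zeta_iP_Ah_i\tau_0$), then each source $i$ transmits $D_i$ bits in its own slot of length $\tau_{S_i}$ with power $P_{S_i}\le P^{max}$ over an AWGN channel of gain $g_i$. *)

(* Defs.v *)
(* concrete reals R. Sources are indexed by i = 0..N-1. *)
From Stdlib Require Import Reals List.
Import ListNotations.
Open Scope R_scope.

Definition log2 (x : R) : R := ln x / ln 2.

Definition sumN (N : nat) (f : nat -> R) : R :=
  fold_right Rplus 0 (map f (seq 0 N)).
(* max with base 0; for N >= 1 and f i > 0 this is the true maximum *)
Definition maxN (N : nat) (f : nat -> R) : R :=
  fold_right Rmax 0 (map f (seq 0 N)).

Definition rate (W N0 : R) (g : nat -> R) (i : nat) (P : R) : R :=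
  W * log2 (1 + P * g i / (W * N0)).

Definition feasible (N : nat) (W N0 PA Pmax : R) (D zeta h g : nat -> R)
    (tau0 : R) (tauS PS : nat -> R) : Prop :=
  0 <= tau0 /\
  forall i, (i < N)%nat ->
    0 <= tauS i /\ 0 <= PS i /\
    PS i * tauS i <= zeta i * PA * h i * tau0 /\
    tauS i * rate W N0 g i (PS i) >= D i /\
    PS i <= Pmax.

Definition objective (N : nat) (tau0 : R) (tauS : nat -> R) : R :=
  tau0 + sumN N tauS.

Definition optimal (N : nat) (W N0 PA Pmax : R) (D zeta h g : nat -> R)
    (tau0 : R) (tauS PS : nat -> R) : Prop :=
  feasible N W N0 PA Pmax D zeta h g tau0 tauS PS /\
  forall tau0' tauS' PS',
    feasible N W N0 PA Pmax D zeta h g tau0' tauS' PS' ->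
    objective N tau0 tauS <= objective N tau0' tauS'.

Definition tau0dd (W N0 PA Pmax : R) (D zeta h g : nat -> R) (i : nat) : R :=
  Pmax / (zeta i * PA * h i) * (D i / rate W N0 g i Pmax).

Definition tau0dd_max (N : nat) (W N0 PA Pmax : R) (D zeta h g : nat -> R) : R :=
  maxN N (tau0dd W N0 PA Pmax D zeta h g).

(* Main.v *)
Require Import Defs.
From Stdlib Require Import Reals Lra Lia List.
Import ListNotations.
Open Scope R_scope.

Lemma sum_le_aux (f g : nat -> R) (l : list nat) :
  (forall i, In i l -> f i <= g i) ->
  fold_right Rplus 0 (map f l) <= fold_right Rplus 0 (map g l).
Proof.
  induction l as [|a l IH]; simpl; intros H; [lra|].
  assert (f a <= g a) by (apply H; auto).
  assert (fold_right Rplus 0 (map f l) <= fold_right Rplus 0 (map g l))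
    by (apply IH; intros; apply H; auto).
  lra.
Qed.

Lemma max_ge_aux (f : nat -> R) (l : list nat) i :
  In i l -> f i <= fold_right Rmax 0 (map f l).
Proof.
  induction l as [|a l IH]; simpl; intros H; [contradiction|].
  destruct H as [<-|H].
  - apply Rmax_l.
  - eapply Rle_trans; [apply IH; auto| apply Rmax_r].
Qed.

Theorem lemma5 (N : nat) (W N0 PA Pmax : R) (D zeta h g : nat -> R) :
  (1 <= N)%nat ->
  0 < W -> 0 < N0 -> 0 < PA -> 0 < Pmax ->
  (forall i, (i < N)%nat -> 0 < D i /\ 0 < zeta i /\ 0 < h i /\ 0 < g i) ->
  forall (tau0 : R) (tauS PS : nat -> R),
    optimal N W N0 PA Pmax D zeta h g tau0 tauS PS ->
    tau0 <= tau0dd_max N W N0 PA Pmax D zeta h g.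
Proof.
  intros HN HW HN0 HPA HPm Hpos tau0 tauS PS [Hfeas Hopt].
  set (M := tau0dd_max N W N0 PA Pmax D zeta h g).
  set (tS := fun i => D i / rate W N0 g i Pmax).
  assert (Hln2 : 0 < ln 2) by (rewrite <- ln_1; apply ln_increasing; lra).
  assert (HWN : 0 < W * N0) by nra.
  assert (Hrpos : forall i, (i < N)%nat -> 0 < rate W N0 g i Pmax).
  { intros i Hi. destruct (Hpos i Hi) as (_&_&_&Hg).
    unfold rate, log2. apply Rmult_lt_0_compat; [lra|].
    apply Rdiv_lt_0_compat; [|lra].
    rewrite <- ln_1; apply ln_increasing; [lra|].
    assert (0 < Pmax * g i / (W * N0)) by (apply Rdiv_lt_0_compat; nra). lra. }
  assert (Hmono : forall i p, (i < N)%nat -> 0 <= p -> p <= Pmax ->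
            rate W N0 g i p <= rate W N0 g i Pmax).
  { intros i p Hi Hp0 Hp. destruct (Hpos i Hi) as (_&_&_&Hg).
    unfold rate, log2. apply Rmult_le_compat_l; [lra|].
    unfold Rdiv. apply Rmult_le_compat_r; [left; apply Rinv_0_lt_compat; lra|].
    assert (Hq0 : 0 <= p * g i / (W * N0)) by (apply Rmult_le_pos; [nra| left; apply Rinv_0_lt_compat; lra]).
    assert (Hq : p * g i / (W * N0) <= Pmax * g i / (W * N0)).
    { unfold Rdiv. apply Rmult_le_compat_r; [left; apply Rinv_0_lt_compat; lra| nra]. }
    destruct (Rle_lt_or_eq_dec _ _ Hq) as [Hl|He].
    - left; apply ln_increasing; lra.
    - right; unfold Rdiv in He; rewrite He; reflexivity. }
  assert (HM : forall i, (i < N)%nat -> tau0dd W N0 PA Pmax D zeta h g i <= M).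
  { intros i Hi. unfold M, tau0dd_max, Defs.maxN. apply max_ge_aux.
    apply in_seq. lia. }
  assert (Hfeas' : feasible N W N0 PA Pmax D zeta h g M tS (fun _ => Pmax)).
  { split.
    - destruct N as [|N']; [lia|].
      eapply Rle_trans; [|apply (HM 0%nat); lia].
      destruct (Hpos 0%nat ltac:(lia)) as (HD&Hz&Hh&_).
      specialize (Hrpos 0%nat ltac:(lia)).
      unfold tau0dd. apply Rmult_le_pos; left; apply Rdiv_lt_0_compat; auto.
      apply Rmult_lt_0_compat; [apply Rmult_lt_0_compat|]; auto.
    - intros i Hi. destruct (Hpos i Hi) as (HD&Hz&Hh&_).
      specialize (Hrpos i Hi). specialize (HM i Hi).
      unfold tS. repeat split; try lra.
      + left; apply Rdiv_lt_0_compat; auto.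
      + assert (Hzph : 0 < zeta i * PA * h i) by
          (apply Rmult_lt_0_compat; [apply Rmult_lt_0_compat|]; auto).
        replace (Pmax * (D i / rate W N0 g i Pmax))
          with (zeta i * PA * h i * tau0dd W N0 PA Pmax D zeta h g i).
        * apply Rmult_le_compat_l; lra.
        * unfold tau0dd. field. split; lra.
      + right. field. lra. }
  specialize (Hopt _ _ _ Hfeas'). unfold objective in Hopt.
  assert (sumN N tS <= sumN N tauS).
  { unfold sumN. apply sum_le_aux. intros i Hin. apply in_seq in Hin.
    assert (Hi : (i < N)%nat) by lia.
    destruct Hfeas as [_ Hf]. destruct (Hf i Hi) as (Ht&Hp&_&Hr&Hpm).
    specialize (Hrpos i Hi). specialize (Hmono i (PS i) Hi Hp Hpm).
    unfold tS. apply (Rmult_le_reg_r (rate W N0 g i Pmax)); auto.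
    unfold Rdiv. rewrite Rmult_assoc, Rinv_l by lra. rewrite Rmult_1_r.
    assert (tauS i * rate W N0 g i (PS i) <= tauS i * rate W N0 g i Pmax)
      by (apply Rmult_le_compat_l; auto). lra. }
  lra.
Qed.
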